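(* Let $\mathbb{K}$ be a field of characteristic $0$, let $m\geq 2$ and $d\geq 2$ be integers, let $M_1,\ldots,M_{\tau_m}$, $\tau_m=\binom{m+d-2}{d-1}$, be all the monomials of degree $d-1$ in $u_1,\ldots,u_m$, let $f=\sum_{j=1}^{\tau_m}x_jM_j$, and let $A=Q/\operatorname{Ann}_Q(f)$ be the associated full Perazzo algebra, where $Q=\mathbb{K}[X_1,\ldots,X_{\tau_m},U_1,\ldots,U_m]$ acts by differentiation. Then for $k=1,\ldots,\lfloor d/2\rfloor$, \[\dim_{\mathbb{K}} A_k=\binom{m+k-1}{k}+\binom{m+d-k-1}{d-k}.\] Moreover, for fixed $d$ there is $m_0$ such that for all $m\geq m_0$ the Hilbert function of $A$ is totally non-unimodal, i.e. $h_1>h_2>\cdots>h_{\lfloor d/2\rfloor}$ where $h_i=\dim A_i$.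
   Context: $A$ is a standard graded Artinian Gorenstein algebra of socle degree $d$ and codimension $m+\tau_m$. *)

(* Defs.v *)
From HB Require Import structures.
From mathcomp Require Import all_boot all_order all_algebra.
From mathcomp Require Import mpoly.
Set Implicit Arguments. Unset Strict Implicit. Unset Printing Implicit Defensive.
Import Order.TTheory GRing.Theory Num.Theory.
Local Open Scope ring_scope.

Section Perazzo.
Variable K : fieldType.

Definition mons (n k : nat) : seq 'X_{1..n} :=
  [seq val mu | mu <- enum [pred mu : 'X_{1..n < k.+1} | mdeg (val mu) == k]].

Definition tau (m d : nat) : nat := size (mons m d.-1).

(* Number of variables of Q = K[X_1..X_tau, U_1..U_m] (and of R = K[x,u]):
   indices 0..tau-1 are the X_j (x_j), indices tau..tau+m-1 the U_i (u_i). *)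
Definition nvars (m d : nat) : nat := tau m d + m.

Definition liftu (m d : nat) (mu : 'X_{1..m}) : 'X_{1..nvars m d} :=
  [multinom (match split i with inl _ => 0%N | inr j => mu j end)
   | i < nvars m d].

Definition xvar (m d : nat) (j : 'I_(tau m d)) : 'I_(nvars m d) := lshift m j.

Definition perazzo_f (m d : nat) : {mpoly K[nvars m d]} :=
  \sum_(j < tau m d) 'X_(xvar j) * 'X_[liftu d (nth 0%MM (mons m d.-1) j)].

Definition contract (n : nat) (alpha F : {mpoly K[n]}) : {mpoly K[n]} :=
  \sum_(mu <- msupp alpha) alpha@_mu *: mderivm mu F.

Definition Ann (n : nat) (F : {mpoly K[n]}) : pred {mpoly K[n]} :=
  [pred alpha | contract alpha F == 0].

Definition dimQ (n k : nat) : nat := size (mons n k).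

Definition Qform (n k : nat) (c : 'rV[K]_(dimQ n k)) : {mpoly K[n]} :=
  \sum_(i < dimQ n k) c 0 i *: 'X_[nth 0%MM (mons n k) i].

(* Matrix of the linear map Q_k -> R, alpha |-> alpha o F, written in the
   monomial bases (target: all monomials of degree <= b; for F of degree
   <= b this captures alpha o F entirely). *)
Definition actmx (n k b : nat) (F : {mpoly K[n]}) :
  'M[K]_(dimQ n k, #|{: 'X_{1..n < b.+1}}|) :=
  \matrix_(i < dimQ n k, j < #|{: 'X_{1..n < b.+1}}|)
     (contract 'X_[nth 0%MM (mons n k) i] F)@_(val (enum_val j)).

(* (Ann_Q F)_k as a subspace of Q_k (row space of kermx), so that
   c is in it iff Qform c \in Ann F  (for F of degree <= b). *)
Definition Ann_k (n k b : nat) (F : {mpoly K[n]}) := kermx (actmx k b F).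

Definition dimA (m d k : nat) : nat :=
  (dimQ (nvars m d) k - \rank (Ann_k k d (perazzo_f m d)))%N.

End Perazzo.

(* Main.v *)
Require Import Defs.
From HB Require Import structures.
From mathcomp Require Import all_boot all_order all_algebra.
From mathcomp Require Import mpoly.
From mathcomp Require Import zify.
Import Order.TTheory GRing.Theory Num.Theory.
Set Implicit Arguments. Unset Strict Implicit. Unset Printing Implicit Defensive.

Lemma mons_mem n k (mu : 'X_{1..n}) : (mu \in mons n k) = (mdeg mu == k).
Proof.
apply/mapP/idP => [[b]|H].
  by rewrite mem_enum inE => /eqP Hb ->; rewrite Hb.
have H' : mdeg mu < k.+1 by rewrite (eqP H).
exists (Sub mu H' : 'X_{1..n < k.+1}) => //.
by rewrite mem_enum inE /=.
Qed.

Lemma mons_uniq n k : uniq (mons n k).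
Proof. by rewrite map_inj_uniq ?enum_uniq //; apply: val_inj. Qed.

Lemma size_mons m e : size (mons m.+1 e) = 'C(e + m, e).
Proof.
rewrite -(size_basis m e); apply: perm_size.
apply: uniq_perm; [exact: mons_uniq | exact: uniq_basis |].
by move=> mu; rewrite mons_mem basis_cover.
Qed.

Section Ext.
Variables T m : nat.

Definition ext (chi : 'X_{1..T}) (mu : 'X_{1..m}) : 'X_{1..T+m} :=
  [multinom match split i with inl a => chi a | inr b => mu b end | i < T + m].
Definition xpart (mu : 'X_{1..T+m}) : 'X_{1..T} := [multinom mu (lshift m i) | i < T].
Definition upart (mu : 'X_{1..T+m}) : 'X_{1..m} := [multinom mu (rshift T i) | i < m].

Lemma ext_l chi mu i : ext chi mu (lshift m i) = chi i.
Proof. by rewrite mnmE (unsplitK (inl i)). Qed.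
Lemma ext_r chi mu i : ext chi mu (rshift T i) = mu i.
Proof. by rewrite mnmE (unsplitK (inr i)). Qed.

Lemma ext_split mu : ext (xpart mu) (upart mu) = mu.
Proof.
apply/mnmP => i; rewrite -(splitK i); case: (split i) => j /=.
  by rewrite ext_l mnmE.
by rewrite ext_r mnmE.
Qed.
Lemma xpart_ext chi mu : xpart (ext chi mu) = chi.
Proof. by apply/mnmP => i; rewrite mnmE ext_l. Qed.
Lemma upart_ext chi mu : upart (ext chi mu) = mu.
Proof. by apply/mnmP => i; rewrite mnmE ext_r. Qed.

Lemma extD chi mu chi' mu' : (ext chi mu + ext chi' mu' = ext (chi + chi') (mu + mu'))%MM.
Proof.
apply/mnmP => i; rewrite mnmDE !mnmE; case: (split i) => j; by rewrite mnmDE.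
Qed.

Lemma ext_inj chi mu chi' mu' : ext chi mu = ext chi' mu' -> chi = chi' /\ mu = mu'.
Proof.
move=> E; split.
  by rewrite -(xpart_ext chi mu) E xpart_ext.
by rewrite -(upart_ext chi mu) E upart_ext.
Qed.

Lemma mdeg_ext chi mu : mdeg (ext chi mu) = mdeg chi + mdeg mu.
Proof.
rewrite !mdegE big_split_ord /=; congr (_ + _); apply: eq_bigr => i _.
  by rewrite ext_l. by rewrite ext_r.
Qed.

Lemma ext00 : ext 0%MM 0%MM = 0%MM.
Proof. by apply/mnmP => i; rewrite mnmE !mnm0E; case: (split i) => j; rewrite ?mnm0E. Qed.

End Ext.

Lemma liftuE m d mu : liftu d mu = ext (T := tau m d) 0%MM mu.
Proof. by apply/mnmP => i; rewrite !mnmE; case: split => //= j; rewrite mnm0E. Qed.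

Lemma U_lshift T m (j : 'I_T) : U_(lshift m j)%MM = ext U_(j)%MM (0%MM : 'X_{1..m}).
Proof.
apply/mnmP => i; rewrite -(splitK i); case: (split i) => j' /=.
  by rewrite ext_l !mnm1E (inj_eq (@lshift_inj _ _)).
rewrite ext_r mnm0E mnm1E.
have -> // : (lshift m j == rshift T j') = false.
apply/negbTE; apply/eqP => /(congr1 val) /= E.
by have := ltn_ord j; rewrite E ltnNge leq_addr.
Qed.

Section Entry.
Variable K : fieldType.
Hypothesis charK0 : [pchar K]%R =i pred0.
Variables m d : nat.

Local Notation T := (tau m d).
Local Notation n := (nvars m d).
Definition Mj (j : 'I_T) : 'X_{1..m} := nth 0%MM (mons m d.-1) j.
Definition sj (j : 'I_T) : 'X_{1..n} := ext U_(j)%MM (Mj j).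

Lemma f_coeff mu : ((perazzo_f K m d)@_mu)%R = ((\sum_(j < T) (mu == sj j)) %:R)%R.
Proof.
rewrite /perazzo_f raddf_sum natr_sum /=; apply: eq_bigr => j _.
rewrite -mpolyXD mcoeffX liftuE /xvar U_lshift extD add0m addm0 eq_sym.
by [].
Qed.

Lemma actmx_nz k (i : 'I_(dimQ n k)) (j : 'I_#|{: 'X_{1..n < d.+1}}|) :
  (actmx k d (perazzo_f K m d) i j != 0)%R =
  [exists jj : 'I_T, (nth 0%MM (mons n k) i + val (enum_val j))%MM == sj jj].
Proof.
rewrite /actmx mxE /contract msuppX big_seq1 mcoeffX eqxx scale1r.
rewrite mcoeff_mderivm f_coeff -mulrnA.
have /pcharf0P -> := charK0.
rewrite muln_eq0 negb_or.
have -> : (\prod_(i0 < n) ((nth 0%MM (mons n k) i + val (enum_val j))%MM i0)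
   ^_ (nth 0%MM (mons n k) i i0) == 0) = false.
  apply/negbTE; rewrite -lt0n; apply: prodn_gt0 => i0.
  by rewrite ffact_gt0 mnmDE leq_addr.
rewrite andbT sum_nat_eq0 negb_forall; apply: eq_existsb => jj.
by rewrite /= eqb0 negbK.
Qed.
End Entry.

Lemma rank_rows_le (F : fieldType) p q (B : 'M[F]_(p,q)) (S : {set 'I_p}) :
  (forall i j, i \notin S -> B i j = 0%R) -> \rank B <= #|S|.
Proof.
move=> HB.
have sub : (B <= \sum_(i in S) <<row i B>>)%MS.
  apply/row_subP => i; case: (boolP (i \in S)) => Hi.
    by apply: (sumsmx_sup i) => //; rewrite genmxE.
  have -> : row i B = 0%R by apply/rowP => j; rewrite !mxE HB.
  exact: sub0mx.
apply: leq_trans (mxrankS sub) _.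
apply: leq_trans (mxrank_sum_leqif _).1 _.
rewrite /= -sum1_card; apply: leq_sum => i _; rewrite genmxE; exact: rank_leq_row.
Qed.

Lemma rank_diag_ge (F : fieldType) p q r (A : 'M[F]_(p,q))
  (f : 'I_r -> 'I_p) (g : 'I_r -> 'I_q) :
  (forall s t, (A (f s) (g t) != 0%R) = (s == t)) -> r <= \rank A.
Proof.
move=> HA.
pose B := rowsub f (colsub g A).
have BE : B = diag_mx (\row_s A (f s) (g s)).
  apply/matrixP => s t; rewrite !mxE.
  case: (eqVneq s t) => [->|ne]; first by rewrite mulr1n.
  by rewrite mulr0n; apply/eqP; rewrite -[_ == _]negbK HA ne.
have rB : \rank B = r.
  apply: mxrank_unit; rewrite BE unitmxE det_diag unitfE.
  by apply/prodf_neq0 => s _; rewrite mxE HA.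
rewrite -rB /B rowsubE; apply: leq_trans (mxrankM_maxr _ _) _.
have -> : colsub g A = (A *m colsub g 1%:M)%R by rewrite mulmx_colsub mulmx1.
exact: mxrankM_maxl.
Qed.

Section Rank.
Variable K : fieldType.
Hypothesis charK0 : [pchar K]%R =i pred0.
Variables m d k : nat.
Hypotheses (hm : 0 < m) (hk1 : 0 < k) (hkd : k < d).

Local Notation T := (tau m d).
Local Notation n := (nvars m d).
Local Notation A := (actmx k d (perazzo_f K m d)).
Local Notation a i := (nth 0%MM (mons n k) i).
Local Notation c j := (val (@enum_val {: 'X_{1..n < d.+1}} _ j)).

Lemma mdeg_a (i : 'I_(dimQ n k)) : mdeg (a i) = k.
Proof. by apply/eqP; rewrite -mons_mem mem_nth. Qed.

Lemma mdeg_Mj (j : 'I_T) : mdeg (Mj j) = d.-1.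
Proof. by apply/eqP; rewrite -mons_mem mem_nth. Qed.

Lemma decomp (mu nu : 'X_{1..n}) (jj : 'I_T) : (mu + nu = sj jj)%MM ->
  (xpart mu + xpart nu = U_(jj))%MM /\ (upart mu + upart nu = Mj jj)%MM.
Proof.
rewrite -[mu]ext_split -[nu]ext_split extD /sj => /ext_inj.
by rewrite !xpart_ext !upart_ext.
Qed.

Lemma rank_upper : \rank A <= size (mons m k) + size (mons m (d - k)).
Proof.
pose S1 := [set i : 'I_(dimQ n k) | xpart (a i) == 0%MM].
pose S2 := [set j : 'I_#|{: 'X_{1..n < d.+1}}| |
              (xpart (c j) == 0%MM) && (mdeg (c j) == d - k)].
pose P := (\matrix_(i, j) if i \in S1 then A i j else 0)%R.
pose Q := (\matrix_(i, j) if i \in S1 then 0 else A i j)%R.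
have AE : A = (P + Q)%R.
  by apply/matrixP => i j; rewrite !mxE; case: (i \in S1); rewrite ?addr0 ?add0r.
have rP : \rank P <= #|S1|.
  by apply: rank_rows_le => i j Hi; rewrite mxE (negbTE Hi).
have rQ : \rank Q <= #|S2|.
  rewrite -mxrank_tr; apply: rank_rows_le => j i Hj; rewrite 2!mxE.
  case: ifP => Hi //; apply/eqP; rewrite -[_ == _]negbK; apply/negP.
  rewrite actmx_nz // => /existsP [jj /eqP E].
  move: Hj; rewrite inE; case/decomp: E => Ex Eu.
  have := congr1 mdeg Ex; rewrite mdegD mdeg1.
  move: Hi; rewrite inE -mdeg_eq0 => /negbT; rewrite -lt0n => Hx.
  move=> Hdx.
  have nl : forall x y : nat, 0 < x -> x + y = 1 -> x = 1 /\ y = 0 by move=> x y; lia.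
  case: (nl _ _ Hx Hdx) => Hxa Hxc.
  apply/negP; rewrite negbK; apply/andP; split; first by rewrite -mdeg_eq0 Hxc.
  have Hc : \val (enum_val j) = ext 0%MM (upart (\val (enum_val j))).
    by rewrite -{1}[\val (enum_val j)]ext_split; move: Hxc => /eqP; rewrite mdeg_eq0 => /eqP ->.
  have Ha := mdeg_a i; rewrite -[a i]ext_split mdeg_ext Hxa in Ha.
  have := congr1 mdeg Eu; rewrite mdegD mdeg_Mj Hc mdeg_ext mdeg0 add0n.
  rewrite upart_ext => H; apply/eqP; lia.
have c1 : #|S1| <= size (mons m k).
  rewrite cardE -(size_map (fun i : 'I_(dimQ n k) => upart (a i))).
  apply: uniq_leq_size.
    rewrite map_inj_in_uniq ?enum_uniq // => i i'; rewrite !mem_enum !inE.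
    move=> /eqP Hi /eqP Hi' E.
    have : a i = a i' by rewrite -[a i]ext_split -[a i']ext_split Hi Hi' E.
    have Hs : forall x : 'I_(dimQ n k), x < size (mons n k) := fun x => ltn_ord x.
    by move/eqP; rewrite nth_uniq ?mons_uniq ?Hs // => /eqP/ord_inj.
  move=> mu /mapP [i]; rewrite mem_enum inE => /eqP Hi ->.
  have E := mdeg_a i; rewrite -[a i]ext_split Hi mdeg_ext mdeg0 add0n in E.
  by rewrite mons_mem E.
have c2 : #|S2| <= size (mons m (d - k)).
  rewrite cardE -(size_map (fun j : 'I_#|{: 'X_{1..n < d.+1}}| => upart (c j))).
  apply: uniq_leq_size.
    rewrite map_inj_in_uniq ?enum_uniq // => i i'; rewrite !mem_enum !inE.
    move=> /andP [/eqP Hi _] /andP [/eqP Hi' _] E.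
    have : c i = c i' by rewrite -[c i]ext_split -[c i']ext_split Hi Hi' E.
    by move/val_inj/enum_val_inj.
  move=> mu /mapP [i]; rewrite mem_enum inE => /andP [/eqP Hi /eqP Hd] ->.
  rewrite -[c i]ext_split Hi mdeg_ext mdeg0 add0n in Hd.
  by rewrite mons_mem Hd.
rewrite AE; apply: leq_trans (mxrank_add _ _) _.
apply: leq_add; [exact: leq_trans rP c1 | exact: leq_trans rQ c2].
Qed.

Lemma nth_inj_ord (X : eqType) (x0 : X) (s : seq X) (i j : 'I_(size s)) :
  uniq s -> nth x0 s i = nth x0 s j -> i = j.
Proof. by move=> u /eqP; rewrite nth_uniq // => /eqP/ord_inj. Qed.

Lemma lr_neq p q (i : 'I_p) (j : 'I_q) : (lshift q i == rshift p j) = false.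
Proof.
apply/negbTE/eqP => /(congr1 val) /= E.
by have := ltn_ord i; rewrite E ltnNge leq_addr.
Qed.

Lemma fae (I : finType) (U : Type) (P : I -> U -> Prop) :
  (forall x, exists u, P x u) -> exists f : I -> U, forall x, P x (f x).
Proof. exact: fin_all_exists. Qed.

Lemma rank_lower : size (mons m k) + size (mons m (d - k)) <= \rank A.
Proof.
pose r1 := size (mons m k); pose r2 := size (mons m (d - k)).
pose u0 : 'I_m := Ordinal hm.
pose g0 : 'X_{1..m} := (U_(u0) *+ (d.-1 - k))%MM.
pose b0 : 'X_{1..m} := (U_(u0) *+ k.-1)%MM.
pose al (s : 'I_r1) := nth 0%MM (mons m k) s.
pose ga (s : 'I_r2) := nth 0%MM (mons m (d - k)) s.
have mdU e : mdeg (U_(u0) *+ e)%MM = e by rewrite mdegMn mdeg1 mul1n.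
have mdal s : mdeg (al s) = k by apply/eqP; rewrite -mons_mem mem_nth.
have mdga s : mdeg (ga s) = d - k by apply/eqP; rewrite -mons_mem mem_nth.
have [ja Hja] : exists ja : 'I_r1 -> 'I_T, forall s, Mj (ja s) = (al s + g0)%MM.
  apply: (fae (P := fun s j => Mj j = (al s + g0)%MM)) => s.
  have : (al s + g0)%MM \in mons m d.-1.
    by rewrite mons_mem mdegD mdU mdal; apply/eqP; lia.
  by case/(nthP 0%MM) => x Hx E; exists (Ordinal Hx).
have [jb Hjb] : exists jb : 'I_r2 -> 'I_T, forall s, Mj (jb s) = (b0 + ga s)%MM.
  apply: (fae (P := fun s j => Mj j = (b0 + ga s)%MM)) => s.
  have : (b0 + ga s)%MM \in mons m d.-1.
    by rewrite mons_mem mdegD mdU mdga; apply/eqP; lia.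
  by case/(nthP 0%MM) => x Hx E; exists (Ordinal Hx).
pose rowm (s : 'I_(r1 + r2)) : 'X_{1..n} :=
  match split s with inl s1 => ext 0%MM (al s1) | inr s2 => ext U_(jb s2) b0 end.
pose colm (s : 'I_(r1 + r2)) : 'X_{1..n} :=
  match split s with inl s1 => ext U_(ja s1) g0 | inr s2 => ext 0%MM (ga s2) end.
have [f Hf] : exists f : 'I_(r1 + r2) -> 'I_(dimQ n k), forall s, a (f s) = rowm s.
  apply: (fae (P := fun s (i : 'I_(dimQ n k)) => a i = rowm s)) => s.
  have : rowm s \in mons n k.
    rewrite mons_mem /rowm; case: (split s) => x; rewrite mdeg_ext.
      by rewrite mdeg0 mdal.
    by rewrite mdeg1 mdU; apply/eqP; lia.
  by case/(nthP 0%MM) => x Hx E; exists (Ordinal Hx).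
have [g Hg] : exists g : 'I_(r1 + r2) -> 'I_#|{: 'X_{1..n < d.+1}}|,
    forall s, c (g s) = colm s.
  apply: (fae (P := fun s (j : 'I_#|{: 'X_{1..n < d.+1}}|) => c j = colm s)) => s.
  have Hd : mdeg (colm s) < d.+1.
    rewrite /colm; case: (split s) => x; rewrite mdeg_ext.
      by rewrite mdeg1 mdU; lia.
    by rewrite mdeg0 mdga; lia.
  exists (enum_rank (Sub (colm s) Hd : 'X_{1..n < d.+1})).
  by rewrite enum_rankK.
apply: (rank_diag_ge (f := f) (g := g)) => s t.
rewrite actmx_nz // Hf Hg /rowm /colm.
rewrite -[s]splitK -[t]splitK; case: (split s) => s'; case: (split t) => t';
  rewrite !unsplitK /= ?lr_neq 1?eq_sym ?lr_neq ?(inj_eq (@lshift_inj _ _)) ?(inj_eq (@rshift_inj _ _)) extD /sj.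
- apply/existsP/eqP => [[jj /eqP /ext_inj [/eqP]]|<-].
    rewrite add0m eq_mnm1 => /eqP <-; rewrite Hja => /addIm E.
    by apply/esym; apply: (@nth_inj_ord _ 0%MM (mons m k) s' t' (mons_uniq _ _) E).
  by exists (ja t'); rewrite add0m Hja.
- apply/existsP => [[jj /eqP /ext_inj [E _]]].
  by move: (mnm1_eq0 jj); rewrite -E add0m eqxx.
- apply/existsP => [[jj /eqP /ext_inj [E _]]].
  by move: (congr1 mdeg E); rewrite mdegD !mdeg1.
- apply/existsP/eqP => [[jj /eqP /ext_inj [/eqP]]|<-].
    rewrite addm0 eq_mnm1 => /eqP <-; rewrite Hjb => /addmI E.
    by apply: (@nth_inj_ord _ 0%MM (mons m (d - k)) _ _ (mons_uniq _ _) E).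
  by exists (jb t'); rewrite addm0 Hjb.
Qed.
End Rank.

Unset Implicit Arguments.

Lemma mono_bin M t s : 'C(M + t, t) <= 'C(M + t + s, t + s).
Proof.
elim: s => [|s IH]; first by rewrite !addn0.
rewrite !addnS binS; exact: leq_trans IH (leq_addl _ _).
Qed.

Lemma key_bin M i e : i + 1 <= M -> i + 1 <= e ->
  'C(M + i + 2, i + 1) + 'C(M + e + 1, e) < 'C(M + i + 1, i) + 'C(M + e + 2, e + 1).
Proof.
move=> hM he.
have h1 : 'C(M + e + 2, e + 1) = 'C(M + e + 1, e + 1) + 'C(M + e + 1, e).
  by rewrite !addn1 -binS; congr 'C(_, _); lia.
have h2 : 'C(M + i + 2, i + 2) <= 'C(M + e + 1, e + 1).
  have := mono_bin M (i + 2) (e + 1 - (i + 2)).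
  have -> : M + (i + 2) + (e + 1 - (i + 2)) = M + e + 1 by lia.
  have -> : i + 2 + (e + 1 - (i + 2)) = e + 1 by lia.
  by rewrite addnA.
have h3 : 'C(M + i + 2, i + 1) <= 'C(M + i + 2, i + 2).
  have := mul_bin_left (M + i + 2) (i + 1).
  rewrite !addn1 (_ : M + i + 2 - i.+1 = M + 1); last by lia.
  move=> E; rewrite -(@leq_pmul2l (i.+2)) //; rewrite (_ : i + 2 = i.+2); last by lia.
  rewrite E; apply: leq_mul => //; lia.
have h4 : 0 < 'C(M + i + 1, i) by rewrite bin_gt0; lia.
lia.
Qed.

Lemma part1 (K : fieldType) (charK0 : [pchar K]%R =i pred0) (d : nat) (hd : 2 <= d)
  m (hm : 2 <= m) k (hk1 : 1 <= k) (hk : k <= d./2) :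
  dimA K m d k = 'C(m + k - 1, k) + 'C(m + d - k - 1, d - k).
Proof.
have hkd : k < d.
  have := odd_double_half d; rewrite -muln2; lia.
rewrite /dimA /Ann_k mxrank_ker subKn ?rank_leq_row //.
have -> : \rank (actmx k d (perazzo_f K m d)) = size (mons m k) + size (mons m (d - k)).
  apply/eqP; rewrite eqn_leq rank_upper ?rank_lower //; lia.
case: m hm => // m' hm.
rewrite !size_mons; congr (_ + _); congr 'C(_, _); lia.
Qed.

Local Open Scope ring_scope.

Theorem proposition2p3 (K : fieldType) (charK0 : [pchar K] =i pred0)
  (d : nat) (hd : (2 <= d)%N) :
  (forall m : nat, (2 <= m)%N ->
     forall k : nat, (1 <= k)%N -> (k <= d./2)%N ->
       dimA K m d k = ('C(m + k - 1, k) + 'C(m + d - k - 1, d - k))%N)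
  /\
  (exists m0 : nat, forall m : nat, (m0 <= m)%N ->
     forall i : nat, (1 <= i)%N -> (i < d./2)%N ->
       (dimA K m d i.+1 < dimA K m d i)%N).
Proof.
split; first by move=> m hm k hk1 hk; apply: part1.
exists (d + 3)%N => m hm i hi1 hi.
have hd2 : (i.*2 + 2 <= d)%N.
  have := odd_double_half d; rewrite -!muln2; lia.
rewrite !part1 //; try lia.
pose M := (m - 2)%N; pose e := (d - i - 1)%N.
have := key_bin M i e.
have -> : (m + i.+1 - 1 = M + i + 2)%N by rewrite /M; lia.
have -> : (m + d - i.+1 - 1 = M + e + 1)%N by rewrite /M /e; lia.
have -> : (d - i.+1 = e)%N by rewrite /e; lia.
have -> : (m + i - 1 = M + i + 1)%N by rewrite /M; lia.
have -> : (m + d - i - 1 = M + e + 2)%N by rewrite /M /e; lia.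
have -> : (d - i = e + 1)%N by rewrite /e; lia.
rewrite -[i.+1]addn1; apply; rewrite /M /e; lia.
Qed.
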